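(* With $D$, $\star$, $D_1=D[X]$ and $[\star]$ as defined in the context, $\mathrm{QMax}^{[\star]}(D_1)=\{Q_1\in\mathrm{Spec}(D_1)\mid Q_1\cap D=(0)\text{ and }\mathrm{c}_D(Q_1)^{\star_f}=D^\star\}\cup\{P[X]\mid P\in\mathrm{QMax}^{\star_f}(D)\}$.
   Context: $D$ is an integral domain with quotient field $K$, $X,Y$ indeterminates, $\star$ a semistar operation on $D$, $D_1:=D[X]$, $K_1:=K(X)$. $\overline{\boldsymbol F}(A)$ is the set of nonzero $A$-submodules of the quotient field of $A$. A semistar operation on $A$ is a map $\star:\overline{\boldsymbol F}(A)\to\overline{\boldsymbol F}(A)$ with $(xE)^\star=xE^\star$ for nonzero $x$ in the quotient field, $E\subseteq F\Rightarrow E^\star\subseteq F^\star$, $E\subseteq E^\star$, $(E^\star)^\star=E^\star$. $E^{\star_f}=\bigcup\{F^\star\mid F\subseteq E,\ F$ nonzero finitely generated fractional ideal$\}$. A nonzero ideal $I$ of $A$ is a quasi-$\star$-ideal if $I^\star\cap A=I$; $\mathrm{QMax}^\star(A)$ is the set of maximal elements among proper quasi-$\star$-ideals. $\mathrm{c}_D(Q_1)$ is the ideal of $D$ generated by all coefficients of all polynomials in $Q_1$. $\boldsymbol\Delta_1^\star:=\{Q_1\in\mathrm{Spec}(D_1)\mid Q_1\cap D=(0),\ \text{or } Q_1=(Q_1\cap D)[X]\text{ and }(Q_1\cap D)^{\star_f}\subsetneq D^\star\}$; $\mathcal S_1^\star:=D_1[Y]\setminus\bigcup\{Q_1[Y]\mid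 Q_1\in\boldsymbol\Delta_1^\star\}$; $[\star]$ is the semistar operation on $D_1$ given by $E^{[\star]}:=E[Y]_{\mathcal S_1^\star}\cap K_1$, where $E[Y]_{\mathcal S_1^\star}$ is the $D_1[Y]_{\mathcal S_1^\star}$-submodule of $K(X,Y)$ generated by $E$. *)

(* Defs.v *)
From HB Require Import structures.
From mathcomp Require Import all_boot all_order all_algebra.
Set Implicit Arguments. Unset Strict Implicit. Unset Printing Implicit Defensive.
Import GRing.Theory.
Local Open Scope ring_scope.

Definition emb (A : idomainType) (a : A) : {fraction A} := @FracField.tofrac A a.

Definition is_ideal (R : comNzRingType) (I : R -> Prop) : Prop :=
  I 0 /\ (forall x y, I x -> I y -> I (x + y)) /\ (forall r x, I x -> I (r * x)).

Definition prime_ideal (R : comNzRingType) (I : R -> Prop) : Prop :=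
  is_ideal I /\ ~ I 1 /\ (forall x y, I (x * y) -> I x \/ I y).

Section Semistar.
Variable A : idomainType.
Local Notation K := {fraction A}.

Definition Fbar (E : K -> Prop) : Prop :=
  [/\ E 0, (forall x y, E x -> E y -> E (x + y)),
      (forall (a : A) x, E x -> E (emb a * x)) & exists x, x != 0 /\ E x].

Definition sub (E F : K -> Prop) : Prop := forall x, E x -> F x.
Definition seteq (E F : K -> Prop) : Prop := forall x, E x <-> F x.

Definition smul (x : K) (E : K -> Prop) : K -> Prop :=
  fun y => exists e, E e /\ y = x * e.

Definition ringset : K -> Prop := fun x => exists a : A, x = emb a.

Definition fimg (I : A -> Prop) : K -> Prop :=
  fun x => exists a : A, I a /\ x = emb a.

Definition semistar (star : (K -> Prop) -> (K -> Prop)) : Prop :=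
  [/\ (forall E, Fbar E -> Fbar (star E)),
      (forall (x : K) E, x != 0 -> Fbar E -> seteq (star (smul x E)) (smul x (star E))),
      (forall E F, Fbar E -> Fbar F -> sub E F -> sub (star E) (star F)),
      (forall E, Fbar E -> sub E (star E)) &
      (forall E, Fbar E -> seteq (star (star E)) (star E))].

Definition span (s : seq K) : K -> Prop :=
  fun z => exists c : 'I_(size s) -> A, z = \sum_(i < size s) emb (c i) * s`_i.

Definition star_f (star : (K -> Prop) -> (K -> Prop)) (E : K -> Prop) : K -> Prop :=
  fun z => exists s : seq K, has (fun x => x != 0) s /\ sub (span s) E /\ star (span s) z.

Definition quasi_ideal (star : (K -> Prop) -> (K -> Prop)) (I : A -> Prop) : Prop :=
  is_ideal I /\ (exists a, a != 0 /\ I a) /\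
  (forall a : A, star (fimg I) (emb a) <-> I a).

Definition QMax (star : (K -> Prop) -> (K -> Prop)) (I : A -> Prop) : Prop :=
  [/\ quasi_ideal star I, ~ I 1 &
      forall J : A -> Prop, quasi_ideal star J -> ~ J 1 ->
        (forall a, I a -> J a) -> forall a, J a <-> I a].
End Semistar.

Section Bracket.
Variable D : idomainType.
Local Notation K := {fraction D}.
Local Notation D1 := {poly D}.
Local Notation K1 := {fraction {poly D}}.
Local Notation L := {fraction {poly K1}}.

Definition contr (Q1 : D1 -> Prop) : D -> Prop := fun d => Q1 d%:P.

Definition extX (P : D -> Prop) : D1 -> Prop := fun p => forall k, P p`_k.

Definition extY (Q1 : D1 -> Prop) : {poly D1} -> Prop := fun f => forall k, Q1 f`_k.

Definition content_ideal (Q1 : D1 -> Prop) : D -> Prop :=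
  fun d => exists n (c : 'I_n -> D) (q : 'I_n -> D1) (k : 'I_n -> nat),
    (forall i, Q1 (q i)) /\ d = \sum_(i < n) c i * (q i)`_(k i).

Variable star : (K -> Prop) -> (K -> Prop).

Definition Delta1 (Q1 : D1 -> Prop) : Prop :=
  prime_ideal Q1 /\
  ((forall d : D, contr Q1 d <-> d = 0) \/
   ((forall p, Q1 p <-> extX (contr Q1) p) /\
    sub (star_f star (fimg (contr Q1))) (star (@ringset D)) /\
    exists x, star (@ringset D) x /\ ~ star_f star (fimg (contr Q1)) x)).

Definition S1 (f : {poly D1}) : Prop :=
  forall Q1, Delta1 Q1 -> ~ extY Q1 f.

Definition embY (f : {poly D1}) : L := @FracField.tofrac _ (map_poly (@emb {poly D}) f).
Definition embK1 (x : K1) : L := @FracField.tofrac _ (x%:P).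

(* E[Y]_{S1}: the D1[Y]_{S1}-submodule of K(X,Y) generated by E *)
Definition genS (E : K1 -> Prop) : L -> Prop :=
  fun z => exists n (f s : 'I_n -> {poly D1}) (e : 'I_n -> K1),
    (forall i, S1 (s i)) /\ (forall i, E (e i)) /\
    z = \sum_(i < n) (embY (f i) / embY (s i)) * embK1 (e i).

(* E^{[star]} := E[Y]_{S1} \cap K1 *)
Definition bracket (E : K1 -> Prop) : K1 -> Prop := fun x => genS E (embK1 x).
End Bracket.

(* Main.v *)
Require Import Defs.
From Stdlib Require Import Classical ClassicalEpsilon FunctionalExtensionality PropExtensionality Lia.

Section Zorn.
Variable T : Type.
Definition zsube (A B : T -> Prop) := forall x, A x -> B x.
Definition zchain (C : (T -> Prop) -> Prop) :=
  forall A B, C A -> C B -> zsube A B \/ zsube B A.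
Definition zbigU (C : (T -> Prop) -> Prop) : T -> Prop := fun x => exists A, C A /\ A x.

Lemma sube_eq A B : zsube A B -> zsube B A -> A = B.
Proof.
intros H1 H2; apply functional_extensionality; intro x.
apply propositional_extensionality; split; auto.
Qed.

Variable F : (T -> Prop) -> Prop.
Variable I : T -> Prop.
Hypothesis FI : F I.
Hypothesis Fch : forall C, (forall A, C A -> F A) -> zchain C -> (exists A, C A) -> F (zbigU C).

Definition gnext (A : T -> Prop) : T -> Prop :=
  match excluded_middle_informative (exists N, F N /\ zsube A N /\ ~ zsube N A) with
  | left h => proj1_sig (constructive_indefinite_description _ h)
  | right _ => A end.

Lemma gnext_infl A : zsube A (gnext A).
Proof.
unfold gnext; case excluded_middle_informative; intro h; [|intros x Hx; exact Hx].
destruct (constructive_indefinite_description _ h) as [N HN]; simpl; exact (proj1 (proj2 HN)).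
Qed.

Lemma gnext_F A : F A -> F (gnext A).
Proof.
unfold gnext; case excluded_middle_informative; intro h; auto.
destruct (constructive_indefinite_description _ h) as [N HN]; simpl; intros _; exact (proj1 HN).
Qed.

Inductive tower : (T -> Prop) -> Prop :=
| tw_I : tower I
| tw_g A : tower A -> tower (gnext A)
| tw_U C : (forall A, C A -> tower A) -> zchain C -> (exists A, C A) -> tower (zbigU C).

Lemma tower_F A : tower A -> F A /\ zsube I A.
Proof.
induction 1 as [| A _ [IH1 IH2] | C HC IH Hch Hne].
- split; [exact FI | intros x Hx; exact Hx].
- split; [apply gnext_F; exact IH1|].
  intros x Hx; apply gnext_infl; auto.
- split.
  + apply Fch; auto. intros A HA; apply (IH A HA).
  + destruct Hne as [A HA]. intros x Hx. exists A; split; auto. apply (IH A HA); auto.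
Qed.

Definition extreme c := tower c /\ forall x, tower x -> zsube x c -> x <> c -> zsube (gnext x) c.

Lemma lemma1 c : extreme c -> forall x, tower x -> zsube x c \/ zsube (gnext c) x.
Proof.
intros [Tc Ec] x Tx; induction Tx as [| y Ty IH | C HC IH Hch Hne].
- left; apply tower_F; auto.
- destruct IH as [H|H].
  + destruct (classic (y = c)) as [->|Hne].
    * right; intros z Hz; exact Hz.
    * left; apply Ec; auto.
  + right; intros z Hz; apply gnext_infl; auto.
- destruct (classic (exists A, C A /\ ~ zsube A c)) as [[A [HA HnA]]|Hno].
  + right. destruct (IH A HA) as [H|H]; [contradiction|].
    intros z Hz; exists A; split; auto.
  + left. intros z [A [HA Hz]].
    destruct (classic (zsube A c)) as [H|H]; [auto|].
    exfalso; apply Hno; exists A; auto.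
Qed.

Lemma all_extreme c : tower c -> extreme c.
Proof.
intro Tc; induction Tc as [| y Ty IH | C HC IH Hch Hne].
- split; [constructor|]. intros x Tx Hs Hn; exfalso; apply Hn.
  apply sube_eq; auto; apply tower_F; auto.
- split; [constructor; auto|]. intros x Tx Hs Hn.
  destruct (lemma1 y IH x Tx) as [H|H].
  + destruct (classic (x = y)) as [->|Hxy].
    * intros z Hz; exact Hz.
    * intros z Hz; apply gnext_infl. apply (proj2 IH x Tx H Hxy); auto.
  + exfalso; apply Hn; apply sube_eq; auto.
- split; [constructor; auto|]. intros x Tx Hs Hn.
  destruct (classic (exists A, C A /\ ~ zsube A x)) as [[A [HA HnA]]|Hno].
  + destruct (lemma1 A (IH A HA) x Tx) as [H|H].
    * assert (x <> A) by (intro E; subst; apply HnA; intros z Hz; exact Hz).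
      intros z Hz. exists A; split; auto. apply (proj2 (IH A HA) x Tx H); auto.
    * exfalso; apply HnA; intros z Hz; apply H; apply gnext_infl; auto.
  + exfalso; apply Hn; apply sube_eq; auto.
    intros z [A [HA Hz]]. destruct (classic (zsube A x)) as [H|H]; auto.
    exfalso; apply Hno; exists A; auto.
Qed.

Lemma tower_chain : zchain tower.
Proof.
intros A B TA TB. destruct (lemma1 A (all_extreme A TA) B TB) as [H|H]; auto.
left; intros z Hz; apply H; apply gnext_infl; auto.
Qed.

Theorem zorn_sets : exists M, F M /\ zsube I M /\
  forall N, F N -> zsube M N -> zsube N M.
Proof.
assert (TU : tower (zbigU tower)).
{ apply tw_U; auto. apply tower_chain. exists I; constructor. }
exists (zbigU tower). split; [apply tower_F; auto|]. split; [apply tower_F; auto|].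
intros N FN HMN. destruct (classic (zsube N (zbigU tower))) as [H|H]; auto.
exfalso.
assert (Hg : zsube (gnext (zbigU tower)) (zbigU tower)).
{ intros z Hz. exists (gnext (zbigU tower)); split; auto. constructor; auto. }
revert Hg. unfold gnext; case excluded_middle_informative; intro h.
- destruct (constructive_indefinite_description _ h) as [N' HN']; simpl. destruct HN' as [_ [H1 H2]]. auto.
- intros _. apply h. exists N; auto.
Qed.
End Zorn.
Arguments zsube {T}. Arguments zchain {T}. Arguments zbigU {T}.
Arguments zorn_sets {T F I}.

From HB Require Import structures.
From mathcomp Require Import all_boot all_order all_algebra.
Set Implicit Arguments. Unset Strict Implicit. Unset Printing Implicit Defensive.
Import GRing.Theory.
Require Import Defs.
Local Open Scope ring_scope.

Section Dlevel.
Variable A : idomainType.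
Local Notation K := {fraction A}.

Lemma emb0 : emb (0 : A) = 0. Proof. exact: rmorph0. Qed.
Lemma emb1 : emb (1 : A) = 1. Proof. exact: rmorph1. Qed.
Lemma embD (x y : A) : emb (x + y) = emb x + emb y. Proof. exact: rmorphD. Qed.
Lemma embM (x y : A) : emb (x * y) = emb x * emb y. Proof. exact: rmorphM. Qed.
Lemma emb_inj (x y : A) : emb x = emb y -> x = y.
Proof. by move=> h; apply/eqP; rewrite -(tofrac_eq x y); apply/eqP. Qed.
Lemma emb_eq0 (x : A) : (emb x == 0) = (x == 0).
Proof. exact: tofrac_eq0. Qed.

Definition subm (M : K -> Prop) :=
  [/\ M 0, (forall x y, M x -> M y -> M (x + y)) & (forall (a : A) x, M x -> M (emb a * x))].

Lemma Fbar_subm E : Fbar E -> subm E.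
Proof. by case=> h0 hD hM _; split. Qed.

Lemma subm_sum M n (F : 'I_n -> K) : subm M -> (forall i, M (F i)) -> M (\sum_(i < n) F i).
Proof.
case=> h0 hD _ hF; elim/big_ind: _ => //.
Qed.

Lemma span_mem (s : seq K) x : x \in s -> span s x.
Proof.
move=> xs; have hi : (index x s < size s)%N by rewrite index_mem.
pose i0 : 'I_(size s) := Ordinal hi.
exists (fun i => if i == i0 then 1 else 0).
rewrite (bigD1 i0) //= eqxx emb1 mul1r big1 ?addr0 /=; first by rewrite nth_index.
by move=> i /negbTE ->; rewrite emb0 mul0r.
Qed.

Lemma span_subm (s : seq K) : subm (span s).
Proof.
split.
- by exists (fun _ => 0); rewrite big1 // => i _; rewrite emb0 mul0r.
- move=> x y [c ->] [d ->]; exists (fun i => c i + d i).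
  by rewrite -big_split /=; apply: eq_bigr => i _; rewrite embD mulrDl.
- move=> a x [c ->]; exists (fun i => a * c i).
  by rewrite mulr_sumr; apply: eq_bigr => i _; rewrite embM mulrA.
Qed.

Lemma span_sub (s : seq K) M : subm M -> (forall x, x \in s -> M x) -> sub (span s) M.
Proof.
move=> hM hs z [c ->]; apply: subm_sum => // i.
case: hM => _ _ hM; apply: hM; apply: hs; exact: mem_nth.
Qed.

Lemma span_Fbar (s : seq K) : has (fun x => x != 0) s -> Fbar (span s).
Proof.
move=> /hasP [x xs nx]; case: (span_subm s) => h0 hD hM; split => //.
by exists x; split => //; apply: span_mem.
Qed.

Lemma ringset_Fbar : Fbar (@ringset A).
Proof.
split.
- by exists 0; rewrite emb0.
- by move=> x y [a ->] [b ->]; exists (a + b); rewrite embD.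
- by move=> a x [b ->]; exists (a * b); rewrite embM.
- by exists 1; split; [rewrite oner_eq0 | exists 1; rewrite emb1].
Qed.

Lemma fimg_subm (I : A -> Prop) : is_ideal I -> subm (fimg I).
Proof.
case=> h0 [hD hM]; split.
- by exists 0; rewrite emb0.
- by move=> x y [a [Ia ->]] [b [Ib ->]]; exists (a + b); rewrite embD; split => //; apply: hD.
- by move=> a x [b [Ib ->]]; exists (a * b); rewrite embM; split => //; apply: hM.
Qed.

Lemma fimg_ringset (I : A -> Prop) : sub (fimg I) (@ringset A).
Proof. by move=> x [a [_ ->]]; exists a. Qed.

Lemma smul_Fbar (x : K) E : x != 0 -> Fbar E -> Fbar (smul x E).
Proof.
move=> nx [h0 hD hM [y [ny Ey]]]; split.
- by exists 0; rewrite mulr0.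
- by move=> u v [e [Ee ->]] [f [Ef ->]]; exists (e + f); rewrite mulrDr; split => //; apply: hD.
- by move=> a u [e [Ee ->]]; exists (emb a * e); split; [apply: hM | rewrite mulrCA].
- by exists (x * y); split; [rewrite mulf_neq0 | exists y].
Qed.

Variable star : (K -> Prop) -> (K -> Prop).
Hypothesis Hstar : semistar star.
Local Notation sf := (star_f star).

Lemma star_Fbar E : Fbar E -> Fbar (star E).
Proof. by case: Hstar => h _ _ _ _; apply: h. Qed.
Lemma star_mono E F : Fbar E -> Fbar F -> sub E F -> sub (star E) (star F).
Proof. by case: Hstar => _ _ h _ _; apply: h. Qed.
Lemma star_ext E : Fbar E -> sub E (star E).
Proof. by case: Hstar => _ _ _ h _; apply: h. Qed.
Lemma star_idem E : Fbar E -> sub (star (star E)) (star E).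
Proof. by case: Hstar => _ _ _ _ h hE x; case: (h E hE x). Qed.
Lemma star_smul x E : x != 0 -> Fbar E -> sub (smul x (star E)) (star (smul x E)).
Proof. by case: Hstar => _ h _ _ _ nx hE z; case: (h x E nx hE z). Qed.

Lemma one_star_big (s : seq K) : has (fun x => x != 0) s -> star (span s) 1 ->
  sub (star (@ringset A)) (star (span s)).
Proof.
move=> hs h1.
have Fs := star_Fbar (span_Fbar hs).
have sub1 : sub (@ringset A) (star (span s)).
  by move=> x [a ->]; rewrite -[emb a]mulr1; case: Fs => _ _ hM _; apply: hM.
move=> z /(star_mono ringset_Fbar Fs sub1) /star_idem; apply; exact: span_Fbar.
Qed.

Lemma sf_mono (E F : K -> Prop) : sub E F -> sub (sf E) (sf F).
Proof. by move=> hEF z [s [hs [hsE hz]]]; exists s; split => //; split => // x /hsE/hEF. Qed.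

Lemma sf_ringset (I : A -> Prop) : sub (sf (fimg I)) (star (@ringset A)).
Proof.
move=> z [s [hs [hsI hz]]]; apply: (star_mono (span_Fbar hs) ringset_Fbar) hz.
by move=> x /hsI /fimg_ringset.
Qed.

Lemma key_contra (s : seq K) (P : A -> Prop) :
  has (fun x => x != 0) s -> star (span s) 1 -> sub (span s) (fimg P) ->
  (exists x, star (@ringset A) x /\ ~ sf (fimg P) x) -> False.
Proof.
move=> hs h1 hsP [x [hx nx]]; apply: nx; exists s; split => //; split => //.
exact: one_star_big.
Qed.

Lemma span_catl (s t : seq K) : sub (span s) (span (s ++ t)).
Proof. by apply: span_sub; [exact: span_subm | move=> x xs; apply: span_mem; rewrite mem_cat xs]. Qed.
Lemma span_catr (s t : seq K) : sub (span t) (span (s ++ t)).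
Proof. by apply: span_sub; [exact: span_subm | move=> x xs; apply: span_mem; rewrite mem_cat xs orbT]. Qed.
Lemma span_cat_sub (s t : seq K) M : subm M -> sub (span s) M -> sub (span t) M -> sub (span (s ++ t)) M.
Proof.
move=> hM hs ht; apply: span_sub => // x; rewrite mem_cat => /orP [] xs.
- by apply: hs; apply: span_mem.
- by apply: ht; apply: span_mem.
Qed.

Lemma sf_idem_aux (J : A -> Prop) (s : seq K) : is_ideal J ->
  (forall x, x \in s -> exists a, x = emb a /\ sf (fimg J) (emb a)) ->
  exists t, sub (span t) (fimg J) /\ (forall x, x \in s -> star (span t) x) /\
    (s != [::] -> has (fun x => x != 0) t).
Proof.
move=> hJ; elim: s => [|x s IH] hs.
  by exists [::]; split; [apply: span_sub => //; exact: fimg_subm | split].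
have [t [htJ [hts htn]]] : exists t, sub (span t) (fimg J) /\ (forall x, x \in s -> star (span t) x) /\
    (s != [::] -> has (fun x => x != 0) t).
  by apply: IH => y ys; apply: hs; rewrite inE ys orbT.
have [a [-> [u [hu [huJ hxu]]]]] := hs x (mem_head _ _).
have hut : has (fun x => x != 0) (u ++ t) by rewrite has_cat hu.
exists (u ++ t); split; [|split].
- by apply: span_cat_sub => //; exact: fimg_subm.
- move=> y; rewrite inE => /orP [/eqP ->|ys].
  + by apply: (star_mono (span_Fbar hu) (span_Fbar hut) (@span_catl u t)).
  + have sn : s != [::] by case: s ys {IH hs hts htn} => //.
    by apply: (star_mono (span_Fbar (htn sn)) (span_Fbar hut) (@span_catr u t)); apply: hts.
- by move=> _.
Qed.

Lemma sf_idem (J : A -> Prop) : is_ideal J ->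
  sub (sf (fimg (fun a => sf (fimg J) (emb a)))) (sf (fimg J)).
Proof.
move=> hJ z [s [hs [hsK hz]]].
have hs' : forall x, x \in s -> exists a, x = emb a /\ sf (fimg J) (emb a).
  by move=> x xs; have [a [ha ->]] := hsK x (span_mem xs); exists a.
have [t [htJ [hts htn]]] := @sf_idem_aux J s hJ hs'.
have sn : s != [::] by move: hs; case: (s).

have Ht := span_Fbar (htn sn).
exists t; split; first exact: htn sn. split => //.
apply: (star_idem Ht); apply: (star_mono (span_Fbar hs) (star_Fbar Ht)) hz.
by apply: span_sub => //; exact: (Fbar_subm (star_Fbar Ht)).
Qed.


Definition nzideal (E : A -> Prop) := is_ideal E /\ exists a, a != 0 /\ E a.

Lemma sf_subm E : nzideal E -> subm (sf (fimg E)).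
Proof.
move=> [hE [a [na Ea]]]; split.
- have hs : has (fun x => x != 0) [:: emb a] by rewrite /= emb_eq0 na.
  exists [:: emb a]; split => //; split.
    by apply: span_sub; [exact: fimg_subm | move=> x; rewrite inE => /eqP ->; exists a].
  by case: (star_Fbar (span_Fbar hs)).
- move=> x y [s [hs [hsE hx]]] [t [ht [htE hy]]].
  have hst : has (fun x => x != 0) (s ++ t) by rewrite has_cat hs.
  exists (s ++ t); split => //; split; first by apply: span_cat_sub => //; exact: fimg_subm.
  case: (star_Fbar (span_Fbar hst)) => _ hD _ _; apply: hD.
  + exact: (star_mono (span_Fbar hs) (span_Fbar hst) (@span_catl s t)).
  + exact: (star_mono (span_Fbar ht) (span_Fbar hst) (@span_catr s t)).
- move=> b x [s [hs [hsE hx]]]; exists s; split => //; split => //.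
  by case: (star_Fbar (span_Fbar hs)) => _ _ hM _; apply: hM.
Qed.

Lemma sf_ext E : nzideal E -> forall x, E x -> sf (fimg E) (emb x).
Proof.
move=> hE x Ex; have [/eqP -> | nx] := boolP (x == 0).
  by rewrite emb0; case: (sf_subm hE).
have hs : has (fun y => y != 0) [:: emb x] by rewrite /= emb_eq0 nx.
exists [:: emb x]; split => //; split.
  by apply: span_sub; [exact: fimg_subm (proj1 hE) | move=> y; rewrite inE => /eqP ->; exists x].
by apply: star_ext; [exact: span_Fbar | apply: span_mem; rewrite inE].
Qed.

Definition Jcl (E : A -> Prop) : A -> Prop := fun x => sf (fimg E) (emb x).

Lemma Jcl_nzideal E : nzideal E -> nzideal (Jcl E).
Proof.
move=> hE; case: (sf_subm hE) => h0 hD hM; split; last first.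
  by case: (hE) => _ [a [na Ea]]; exists a; split => //; apply: sf_ext.
split; first by rewrite /Jcl emb0.
split; first by move=> x y hx hy; rewrite /Jcl embD; apply: hD.
by move=> r x hx; rewrite /Jcl embM; apply: hM.
Qed.

Lemma Jcl_quasi E : nzideal E -> quasi_ideal sf (Jcl E).
Proof.
move=> hE; have hJ := Jcl_nzideal hE; split; first exact: (proj1 hJ).
split; first exact: (proj2 hJ).
move=> a; split; last exact: sf_ext.
by move=> h; apply: (sf_idem (proj1 hE)).
Qed.

Lemma quasi_nz E : quasi_ideal sf E -> nzideal E.
Proof. by case=> h1 [h2 _]; split. Qed.

Lemma star_prod (s t : seq K) : has (fun x => x != 0) s -> has (fun x => x != 0) t ->
  star (span s) 1 -> star (span t) 1 ->
  star (span [seq x * y | x <- s, y <- t]) 1.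
Proof.
move=> hs ht h1 h2.
set st := [seq x * y | x <- s, y <- t].
have hst : has (fun x => x != 0) st.
  move: hs ht => /hasP [x xs nx] /hasP [y yt ny]; apply/hasP; exists (x * y).
    by apply: allpairs_f. by rewrite mulf_neq0.
have Fst := star_Fbar (span_Fbar hst).
have Ft := span_Fbar ht.
have sub_s : sub (span s) (star (span st)).
  apply: span_sub; first exact: Fbar_subm Fst.
  move=> x xs; have [/eqP -> | nx] := boolP (x == 0); first by case: Fst.
  have hxt : sub (smul x (span t)) (span st).
    move=> z [e [he ->]].
    have hM : subm (fun y => span st (x * y)).
      case: (span_subm st) => a0 aD aM; split; first by rewrite mulr0.
        by move=> u v hu hv; rewrite mulrDr; apply: aD.
      by move=> a u hu; rewrite mulrCA; apply: aM.
    by apply: (span_sub hM) he => y yt; apply: span_mem; apply: allpairs_f.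
  have := star_smul nx Ft (ex_intro _ 1 (conj h2 (esym (mulr1 x)))).
  by apply: (star_mono (smul_Fbar nx Ft) (span_Fbar hst)).
by apply: (star_idem (span_Fbar hst)); apply: (star_mono (span_Fbar hs) Fst sub_s).
Qed.

Lemma QMax_getone P : QMax sf P -> forall a, ~ P a -> exists s, has (fun x => x != 0) s /\
     (forall x, x \in s -> exists p u, P p /\ x = emb (p + u * a)) /\ star (span s) 1.
Proof.
move=> [hq n1 hmax]; have hP := quasi_nz hq.
move=> a nPa.
pose E := fun x => exists p u, P p /\ x = p + u * a.
have hE : nzideal E.
  case: hP => [[p0 [pD pM]] [b [nb Pb]]]; split; last first.
    by exists b; split => //; exists b, 0; rewrite mul0r addr0.
  split; first by exists 0, 0; rewrite mul0r addr0.
  split.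
    move=> x y [p [u [Pp ->]]] [q [v [Pq ->]]]; exists (p + q), (u + v); split; first exact: pD.
    by rewrite mulrDl addrACA.
  move=> r x [p [u [Pp ->]]]; exists (r * p), (r * u); split; first exact: pM.
  by rewrite mulrDr mulrA.
have qE := Jcl_quasi hE.
have PE : forall x, P x -> Jcl E x.
  by move=> x Px; apply: (sf_ext hE); rewrite /E; exists x, 0; rewrite mul0r addr0.
have : Jcl E 1.
  apply: NNPP => n1E; apply: nPa; apply/(hmax _ qE n1E PE).
  by apply: (sf_ext hE); rewrite /E; exists 0, 1; split; [case: hP => [[]] | rewrite mul1r add0r].
rewrite /Jcl emb1 => -[s [hs [hsE h1]]]; exists s; split => //; split => // x xs.
have [y [[p [u [Pp ->]]] ->]] := hsE x (span_mem xs); by exists p, u.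
Qed.

Lemma QMax_prime P : QMax sf P -> prime_ideal P.
Proof.
move=> hQ; have getone := QMax_getone hQ; case: hQ => hq n1 hmax; have hP := quasi_nz hq.
split; first exact: (proj1 hP). split => // a b Pab.
apply: NNPP => /not_or_and [nPa nPb].
have [s [hs [hsa h1]]] := getone a nPa.
have [t [ht [htb h2]]] := getone b nPb.
have := star_prod hs ht h1 h2 => h12.
apply: n1; case: hq => hI [_ hq]; apply/hq; rewrite emb1.
have hst : has (fun x => x != 0) [seq x * y | x <- s, y <- t].
  move: hs ht => /hasP [x xs nx] /hasP [y yt ny]; apply/hasP; exists (x * y).
    by apply: allpairs_f. by rewrite mulf_neq0.
exists [seq x * y | x <- s, y <- t]; split => //; split => //.
apply: span_sub; first exact: fimg_subm.
move=> z /allpairsP [[x y] /= [xs yt ->]].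
have [p [u [Pp ->]]] := hsa x xs; have [q [v [Pq ->]]] := htb y yt.
case: hI => _ [pD pM].
exists ((p + u * a) * (q + v * b)); split; last by rewrite embM.
rewrite mulrDl; apply: (pD); first by rewrite mulrC; apply: (pM).
rewrite mulrDr; apply: (pD); first by apply: (pM).
by rewrite mulrACA; apply: (pM).
Qed.


Lemma chain_list (C : (A -> Prop) -> Prop) (s : seq K) :
  zchain C -> (exists B, C B) -> (forall x, x \in s -> fimg (zbigU C) x) ->
  exists B, C B /\ forall x, x \in s -> fimg B x.
Proof.
move=> hch [B0 CB0]; elim: s => [|x s IH] hs; first by exists B0.
have [B [CB hB]] : exists B, C B /\ forall x, x \in s -> fimg B x.
  by apply: IH => y ys; apply: hs; rewrite inE ys orbT.
have [a [[B' [CB' B'a]] ex]] := hs x (mem_head _ _).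
case: (hch B B' CB CB') => hBB'.
- exists B'; split => // y; rewrite in_cons => /orP [/eqP ->|ys]; first by exists a.
  by have [b [Bb ->]] := hB y ys; exists b; split => //; apply: hBB'.
- exists B; split => // y; rewrite in_cons => /orP [/eqP ->|ys]; last exact: hB.
  by exists a; split => //; apply: hBB'.
Qed.

Lemma exists_QMax (I : A -> Prop) : nzideal I -> ~ sf (fimg I) 1 ->
  exists P, QMax sf P /\ forall x, I x -> P x.
Proof.
move=> hI nI1.
pose F := fun J : A -> Prop => is_ideal J /\ zsube I J /\ ~ sf (fimg J) 1.
have FI : F I by split; [exact: (proj1 hI) | split => // x].
have Fch : forall C, (forall B, C B -> F B) -> zchain C -> (exists B, C B) -> F (zbigU C).
  move=> C hF hch [B0 CB0]; split; [|split].
  - split; first by exists B0; split => //; case: (hF B0 CB0) => [[]].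
    split.
      move=> x y [B [CB Bx]] [B' [CB' B'y]].
      case: (hch B B' CB CB') => h.
      + exists B'; split => //; case: (hF B' CB') => [[_ [hD _]] _]; apply: hD => //; exact: h.
      + exists B; split => //; case: (hF B CB) => [[_ [hD _]] _]; apply: hD => //; exact: h.
    move=> r x [B [CB Bx]]; exists B; split => //; case: (hF B CB) => [[_ [_ hM]] _]; exact: hM.
  - by move=> x Ix; exists B0; split => //; case: (hF B0 CB0) => _ [h _]; apply: h.
  - move=> [s [hs [hsU h1]]].
    have [B [CB hB]] := chain_list hch (ex_intro _ B0 CB0) (fun x xs => hsU x (span_mem xs)).
    case: (hF B CB) => hBi [_ nB1]; apply: nB1; exists s; split => //; split => //.
    by apply: span_sub => //; exact: fimg_subm.
have [M [[hM [IM nM1]] [_ Mmax]]] := zorn_sets FI Fch.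
have hMn : nzideal M by split => //; case: hI => _ [a [na Ia]]; exists a; split => //; apply: IM.
have Mone : ~ M 1 by move=> M1; apply: nM1; rewrite -emb1; apply: sf_ext.
exists M; split; last exact: IM.
split; [ | exact: Mone | ].
- split; first exact: (proj1 hMn). split; first exact: (proj2 hMn).
  move=> a; split; last exact: (sf_ext hMn).
  move=> h; apply: (Mmax (Jcl M) _ _ a h).
  split; first exact: (proj1 (Jcl_nzideal hMn)).
  split; first by move=> x /IM; apply: (sf_ext hMn).
  by move=> h1; apply: nM1; apply: (sf_idem hM).
  by move=> x Mx; apply: (sf_ext hMn).
- move=> J hJ nJ1 MJ a; split; last exact: MJ.
  move=> Ja; apply: (Mmax J _ MJ a Ja); split; first exact: (proj1 hJ).
  split; first by move=> x /IM /MJ.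
  move=> h; apply: nJ1; case: hJ => _ [_ hq]; apply/hq; rewrite emb1; exact: h.
Qed.

End Dlevel.


Lemma ex_minP (P : nat -> Prop) : (exists n, P n) -> exists n, P n /\ forall m, (m < n)%N -> ~ P m.
Proof.
move=> [n Pn]; elim/ltn_ind: n Pn => n IH Pn.
case: (classic (exists m, (m < n)%N /\ P m)) => [[m [lt Pm]]|h]; first exact: IH lt Pm.
by exists n; split => // m lt Pm; apply: h; exists m.
Qed.

Section Ideals.
Variable R : comNzRingType.

Lemma ideal_sum (I : R -> Prop) n (F : 'I_n -> R) : is_ideal I -> (forall i, I (F i)) -> I (\sum_(i < n) F i).
Proof. by case=> h0 [hD _] hF; elim/big_ind: _ => //. Qed.

Lemma ideal_opp (I : R -> Prop) x : is_ideal I -> I x -> I (- x).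
Proof. by case=> _ [_ hM] Ix; rewrite -mulN1r; apply: hM. Qed.

Lemma ideal_mulr (I : R -> Prop) x r : is_ideal I -> I x -> I (x * r).
Proof. by case=> _ [_ hM] Ix; rewrite mulrC; apply: hM. Qed.

Definition polyext (I : R -> Prop) : {poly R} -> Prop := fun p => forall k, I p`_k.

Lemma polyext_ideal I : is_ideal I -> is_ideal (polyext I).
Proof.
move=> hI; case: (hI) => h0 [hD hM]; split; first by move=> k; rewrite coef0.
split; first by move=> x y hx hy k; rewrite coefD; apply: hD.
move=> r x hx k; rewrite coefM; apply: ideal_sum => // i; exact: hM.
Qed.

Lemma polyextC I c : is_ideal I -> (polyext I c%:P <-> I c).
Proof.
move=> hI; split; first by move/(_ 0%N); rewrite coefC.
by move=> Ic k; rewrite coefC; case: eqP => // _; case: hI.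
Qed.

Lemma polyext_prime I : prime_ideal I -> prime_ideal (polyext I).
Proof.
move=> [hI [n1 hP]]; split; first exact: polyext_ideal.
split; first by move/(_ 0%N); rewrite coef1.
move=> f g hfg; apply: NNPP => /not_or_and [nf ng].
have [i [fi hi]] := ex_minP (not_all_ex_not _ _ nf).
have [j [gj hj]] := ex_minP (not_all_ex_not _ _ ng).
have := hfg (i + j)%N; rewrite coefM.
have lt : (i < (i + j).+1)%N by rewrite ltnS leq_addr.
rewrite (bigD1 (Ordinal lt)) //= addKn => h.
have hrest : I (\sum_(k < (i + j).+1 | k != Ordinal lt) f`_k * g`_(i + j - k)).
  elim/big_ind: _ => //; [by case: hI | by case: hI => _ []|].
  move=> k nk.
  have : (k != i :> nat) by apply: contraNneq nk => e; apply/eqP; apply: val_inj.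
  rewrite neq_ltn => /orP [lki|lik].
  - apply: ideal_mulr => //; apply: NNPP; exact: hi.
  - rewrite mulrC; apply: ideal_mulr => //; apply: NNPP; apply: hj.
    rewrite -(ltn_add2l k) subnKC; first by rewrite ltn_add2r.
    by rewrite -ltnS; exact: ltn_ord.
have : I (f`_i * g`_j).
  by have := (proj1 (proj2 hI)) _ _ h (ideal_opp hI hrest); rewrite addrK.
by case/hP.
Qed.

End Ideals.

Section D1level.
Variable D : idomainType.
Local Notation K := {fraction D}.
Local Notation D1 := {poly D}.
Local Notation K1 := {fraction {poly D}}.
Local Notation L := {fraction {poly K1}}.
Variable star : (K -> Prop) -> (K -> Prop).
Hypothesis Hstar : semistar star.

Lemma zero_prime : prime_ideal (fun p : D1 => p = 0).
Proof.
split; first split => //.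
  by split => [x y -> ->|r x ->]; rewrite ?addr0 ?mulr0.
split; first by move/eqP; rewrite oner_eq0.
by move=> x y /eqP; rewrite mulf_eq0 => /orP [] /eqP; [left|right].
Qed.

Lemma Delta_zero : Delta1 star (fun p : D1 => p = 0).
Proof.
split; [exact: zero_prime | left => d; rewrite /contr].
by split => [h|->]; [apply/eqP; rewrite -polyC_eq0 h | rewrite polyC0].
Qed.

Lemma S1_neq0 s : S1 star s -> s != 0.
Proof.
move=> hs; apply/negP => /eqP s0; apply: (hs _ Delta_zero) => k.
by rewrite s0 coef0.
Qed.

Lemma S1_1 : S1 star 1.
Proof.
move=> Q [[_ [n1 _]] _] h; apply: n1; move: (h 0%N); by rewrite coef1.
Qed.

Lemma S1_mul s t : S1 star s -> S1 star t -> S1 star (s * t).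
Proof.
move=> hs ht Q hQ hst; have [_ [_ hP]] := polyext_prime (proj1 hQ).
by case: (hP s t hst); [apply: hs | apply: ht].
Qed.

Lemma S1_prod n (F : 'I_n -> {poly D1}) : (forall i, S1 star (F i)) -> S1 star (\prod_(i < n) F i).
Proof. by move=> hF; elim/big_ind: _ => //; [exact: S1_1 | exact: S1_mul]. Qed.

Lemma pe_mulr (J : D1 -> Prop) (x r : {poly D1}) : is_ideal J -> polyext J x -> polyext J (x * r).
Proof. by move=> hJ hx; exact: (@ideal_mulr _ (polyext J) x r (polyext_ideal hJ) hx). Qed.
Lemma pe_mull (J : D1 -> Prop) (x r : {poly D1}) : is_ideal J -> polyext J x -> polyext J (r * x).
Proof. by move=> hJ hx; rewrite mulrC; apply: pe_mulr. Qed.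

Definition cl (J : D1 -> Prop) (g : D1) := exists s, S1 star s /\ polyext J (s * g%:P).

Lemma cl_ext J g : is_ideal J -> J g -> cl J g.
Proof.
move=> hJ Jg; exists 1; split; first exact: S1_1.
by rewrite mul1r; apply/(polyextC _ hJ).
Qed.

Lemma cl_ideal J : is_ideal J -> is_ideal (cl J).
Proof.
move=> hJ; have hJY := polyext_ideal hJ.
split; first by apply: cl_ext => //; case: hJ.
split.
  move=> x y [s [hs hx]] [t [ht hy]]; exists (s * t); split; first exact: S1_mul.
  rewrite polyCD mulrDr; case: (hJY) => _ [hD hM]; apply: hD.
    by rewrite mulrAC; exact: (@ideal_mulr _ (polyext J) (s * x%:P) t hJY hx).
  by rewrite -mulrA; exact: (hM s _ hy).
move=> r x [s [hs hx]]; exists s; split => //.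
by rewrite polyCM mulrCA; case: (hJY) => _ [_ hM]; apply: hM.
Qed.

Lemma cl_idem J g : is_ideal J -> cl (cl J) g -> cl J g.
Proof.
move=> hJ [s [hs hsg]].
have hJY := polyext_ideal hJ.
set h := s * g%:P in hsg.
have /fin_all_exists [t ht] : forall i : 'I_(size h), exists t, S1 star t /\ polyext J (t * (h`_i)%:P).
  by move=> i; apply: hsg.
exists ((\prod_(i < size h) t i) * s); split.
  by apply: S1_mul => //; apply: S1_prod => i; case: (ht i).
rewrite -mulrA -/h -[h in _ * h]coefK poly_def mulr_sumr.
apply: ideal_sum => // i.
rewrite -mul_polyC mulrA; apply: (pe_mulr _ hJ).
rewrite (bigD1 i) //= mulrAC; apply: (pe_mulr _ hJ).
by case: (ht i).
Qed.


Lemma embYD x y : embY (x + y) = embY x + embY y :> L.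
Proof. by rewrite /embY /emb !rmorphD. Qed.
Lemma embYM x y : embY (x * y) = embY x * embY y :> L.
Proof. by rewrite /embY /emb !rmorphM. Qed.
Lemma embY0 : embY 0 = 0 :> L.
Proof. by rewrite /embY /emb !rmorph0. Qed.
Lemma embY_sum n (F : 'I_n -> {poly D1}) : embY (\sum_(i < n) F i) = \sum_(i < n) embY (F i) :> L.
Proof. by rewrite /embY /emb !rmorph_sum. Qed.
Lemma embY_prod n (F : 'I_n -> {poly D1}) : embY (\prod_(i < n) F i) = \prod_(i < n) embY (F i) :> L.
Proof. by rewrite /embY /emb !rmorph_prod. Qed.
Lemma embY_prodP n (F : 'I_n -> {poly D1}) (P : pred 'I_n) :
  embY (\prod_(i < n | P i) F i) = \prod_(i < n | P i) embY (F i) :> L.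
Proof. by rewrite /embY /emb !rmorph_prod. Qed.
Lemma embYC q : embY (q%:P) = embK1 (emb q) :> L.
Proof. by rewrite /embY /embK1 /emb map_polyC. Qed.
Lemma embY_inj (x y : {poly D1}) : embY x = embY y -> x = y.
Proof.
rewrite /embY => /eqP; rewrite tofrac_eq => /eqP.
apply: map_inj_poly; last by rewrite /emb rmorph0.
by move=> u v /eqP; rewrite /emb tofrac_eq => /eqP.
Qed.
Lemma embY_neq0 (x : {poly D1}) : x != 0 -> embY x != 0 :> L.
Proof. by move=> nx; apply/eqP => h; move: nx; rewrite -embY0 in h; rewrite (embY_inj h) eqxx. Qed.

Lemma fld_aux (F: fieldType) (a b c e : F): a != 0 -> a*b*(c/a*e) = c*b*e.
Proof. move=> na. rewrite -!mulrA [LHS]mulrCA [a * _]mulrCA mulVKf // mulrCA. by []. Qed.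
Lemma fld_aux2 (F: fieldType) (s x c : F): s != 0 -> s * (x / s * c) = c * x.
Proof. move=> na. rewrite -mulrA mulrCA mulVKf //. by rewrite mulrC. Qed.

Lemma CL (J : D1 -> Prop) g : is_ideal J -> (bracket star (fimg J) (emb g) <-> cl J g).
Proof.
move=> hJ; have hJY := polyext_ideal hJ; split.
- move=> [n [f [s [e [hs [he heq]]]]]].
  have /fin_all_exists [q hq] : forall i, exists q, J q /\ e i = emb q.
    by move=> i; have [a [Ja ->]] := he i; exists a.
  exists (\prod_(i < n) s i); split; first exact: S1_prod.
  have -> : (\prod_(i < n) s i) * g%:P = \sum_(i < n) f i * (\prod_(j < n | j != i) s j) * (q i)%:P.
    apply: embY_inj; rewrite embYM embY_sum embYC heq mulr_sumr; apply: eq_bigr => i _.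
    rewrite !embYM embYC -(proj2 (hq i)) embY_prod embY_prodP (bigD1 i) //=.
    have nz : embY (s i) != 0 :> L by apply: embY_neq0; apply: S1_neq0.
    set a := embY (s i); set b := \prod_(j < n | j != i) embY (s j).
    exact: fld_aux.
  apply: ideal_sum => // i; apply: pe_mull => //; apply/polyextC => //; exact: (proj1 (hq i)).
- move=> [s [hs hsg]]; set h := s * g%:P in hsg.
  exists (size h), (fun i => 'X^i), (fun _ => s), (fun i => emb h`_i).
  split => //; split; first by move=> i; exists h`_i.
  have nz : embY s != 0 :> L by apply: embY_neq0; apply: S1_neq0.
  rewrite -embYC; apply: (mulfI nz); rewrite -embYM -/h mulr_sumr.
  rewrite -[h in LHS]coefK poly_def embY_sum; apply: eq_bigr => i _.
  by rewrite -mul_polyC embYM embYC fld_aux2.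
Qed.

End D1level.


Section Main.
Variable D : idomainType.
Local Notation K := {fraction D}.
Local Notation D1 := {poly D}.
Local Notation K1 := {fraction {poly D}}.
Variable star : (K -> Prop) -> (K -> Prop).
Hypothesis Hstar : semistar star.
Local Notation sf := (star_f star).

Lemma contr_ideal (Q : D1 -> Prop) : is_ideal Q -> is_ideal (contr Q).
Proof.
case=> h0 [hD hM]; split; first by rewrite /contr polyC0.
split; first by move=> x y hx hy; rewrite /contr polyCD; apply: hD.
by move=> r x hx; rewrite /contr polyCM; apply: hM.
Qed.

Lemma content_ideal_ideal (Q : D1 -> Prop) (q0 : D1) : Q q0 -> is_ideal (content_ideal Q).
Proof.
move=> Qq0; split.
  by exists 0%N, (fun _ => 0), (fun _ => q0), (fun _ => 0%N); rewrite big_ord0; split => // [[]].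
split.
  move=> x y [n [c [q [k [hq ->]]]]] [m [c' [q' [k' [hq' ->]]]]].
  exists (n + m)%N, (fun i => match split i with inl a => c a | inr b => c' b end),
    (fun i => match split i with inl a => q a | inr b => q' b end),
    (fun i => match split i with inl a => k a | inr b => k' b end).
  split; first by move=> i; case: split.
  rewrite big_split_ord /=; congr (_ + _); apply: eq_bigr => i _.
  - by rewrite (unsplitK (inl _ i)).
  - by rewrite (unsplitK (inr _ i)).
move=> r x [n [c [q [k [hq ->]]]]]; exists n, (fun i => r * c i), q, k; split => //.
by rewrite mulr_sumr; apply: eq_bigr => i _; rewrite mulrA.
Qed.

Lemma content_of (Q : D1 -> Prop) q k : Q q -> content_ideal Q q`_k.
Proof.
move=> Qq; exists 1%N, (fun _ => 1), (fun _ => q), (fun _ => k); split => //.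
by rewrite big_ord1 mul1r.
Qed.

Lemma content_G (Q : D1 -> Prop) a : content_ideal Q a ->
  exists n (q : 'I_n -> D1), (forall i, Q (q i)) /\
    forall P' : D -> Prop, is_ideal P' -> (forall i, extX P' (q i)) -> P' a.
Proof.
move=> [n [c [q [k [hq ->]]]]]; exists n, q; split => // P' hP hP'.
by apply: ideal_sum => // i; case: hP => _ [_ hM]; apply: hM; apply: hP'.
Qed.

Lemma content_sub (Q : D1 -> Prop) (P : D -> Prop) : is_ideal P -> (forall q, Q q -> extX P q) ->
  forall a, content_ideal Q a -> P a.
Proof.
move=> hP hQ a /content_G [n [q [hq h]]]; apply: h => // i; apply: hQ; exact: hq.
Qed.

Lemma shift_coef (S T : {poly D1}) (R : D1 -> Prop) : R 0 ->
  (forall k, R (S + 'X^((size S).+1) * T)`_k) -> (forall k, R S`_k) /\ (forall k, R T`_k).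
Proof.
move=> R0 h; split => k.
- have := h k; rewrite coefD coefXnM.
  case: ltnP => lk; first by rewrite addr0.
  by rewrite nth_default // ltnW.
- have := h ((size S).+1 + k)%N; rewrite coefD coefXnM ltnNge leq_addr /= addKn.
  by rewrite nth_default ?add0r //; apply: leq_trans (leqnSn _) (leq_addr _ _).
Qed.

Definition Gprop (J : D1 -> Prop) (a : D) := exists n (q : 'I_n -> D1), (forall i, J (q i)) /\
    forall P' : D -> Prop, is_ideal P' -> (forall i, extX P' (q i)) -> P' a.

Lemma build_S (J : D1 -> Prop) (d : D) (s : seq K) : is_ideal J -> J d%:P ->
  (forall x, x \in s -> exists a, x = emb a /\ Gprop J a) ->
  exists S : {poly D1}, polyext J S /\ S`_0 = d%:P /\
    forall x, x \in s -> exists a, x = emb a /\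
      forall P' : D -> Prop, is_ideal P' -> (forall k, extX P' S`_k) -> P' a.
Proof.
move=> hJ Jd; elim: s => [|x s IH] hs.
  exists (d%:P)%:P; split; first by apply/polyextC.
  by split; [rewrite coefC | move=> x].
have [S [JS [S0 hS]]] : exists S : {poly D1}, polyext J S /\ S`_0 = d%:P /\
    forall x, x \in s -> exists a, x = emb a /\
      forall P' : D -> Prop, is_ideal P' -> (forall k, extX P' S`_k) -> P' a.
  by apply: IH => y ys; apply: hs; rewrite in_cons ys orbT.
have [a [ex [n [q [hq hG]]]]] := hs x (mem_head _ _).
pose T : {poly D1} := \poly_(i < n) (nth 0 [seq q i | i <- enum 'I_n] i).
have Tq : forall i : 'I_n, T`_i = q i.
  by move=> i; rewrite coef_poly ltn_ord (nth_map i) ?size_enum_ord // nth_ord_enum.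
have JT : forall k, J T`_k.
  move=> k; rewrite coef_poly; case: ltnP => lk; last by case: hJ.
  by rewrite (nth_map (Ordinal lk)) ?size_enum_ord //; apply: hq.
exists (S + 'X^((size S).+1) * T); split; [|split].
- move=> k; rewrite coefD coefXnM; case: hJ => h0 [hD _]; apply: hD; first exact: JS.
  by case: ltnP => _ //.
- by rewrite coefD coefXnM /= addr0.
- move=> y; rewrite in_cons => /orP [/eqP ->|ys].
  + exists a; split => // P' hP' hk.
    have R0 : extX P' 0 by move=> m; rewrite coef0; case: hP'.
    have [_ hT] := shift_coef R0 hk.
    by apply: hG => // i; rewrite -Tq; apply: hT.
  + have [b [eb hb]] := hS y ys; exists b; split => // P' hP' hk.
    have R0 : extX P' 0 by move=> m; rewrite coef0; case: hP'.
    have [hS' _] := shift_coef R0 hk.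
    by apply: hb => //; apply: hS'.
Qed.

Lemma S1_build (S : {poly D1}) (d : D) (s : seq K) : d != 0 -> S`_0 = d%:P ->
  has (fun x => x != 0) s -> star (span s) 1 ->
  (forall x, x \in s -> exists a, x = emb a /\
      forall P' : D -> Prop, is_ideal P' -> (forall k, extX P' S`_k) -> P' a) ->
  S1 star S.
Proof.
move=> nd S0 hs h1 hsP Q [hQp hQ] hSQ.
have hQi := proj1 hQp.
case: hQ => [h0 | [hext [hsub hx]]].
  by move: (hSQ 0%N); rewrite S0 => /(proj1 (h0 d)) d0; move: nd; rewrite d0 eqxx.
have hc := contr_ideal hQi.
apply: (key_contra Hstar hs h1 _ hx).
apply: span_sub; first exact: fimg_subm.
move=> x xs; have [a [-> ha]] := hsP x xs; exists a; split => //.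
by apply: ha => // k; apply/hext; apply: hSQ.
Qed.

Lemma quasiB (J : D1 -> Prop) : quasi_ideal (bracket star) J <->
  [/\ is_ideal J, (exists a, a != 0 /\ J a) & forall a, cl star J a <-> J a].
Proof.
split.
- move=> [hJ [hnz hq]]; split => // a; rewrite -(CL star a hJ); exact: hq.
- move=> [hJ hnz hq]; split => //; split => // a; rewrite (CL star a hJ); exact: hq.
Qed.

Lemma Delta_quasi (Q : D1 -> Prop) : Delta1 star Q -> (exists a, a != 0 /\ Q a) ->
  quasi_ideal (bracket star) Q.
Proof.
move=> hD hnz; have [hQi [n1 hP]] := proj1 hD; apply/quasiB; split => // a; split; last first.
  exact: cl_ext.
move=> [s [hs hsa]]; have [_ [_ hPY]] := polyext_prime (proj1 hD).
case: (hPY _ _ hsa) => h; first by exfalso; apply: (hs Q hD).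
by move/(polyextC _ hQi): h.
Qed.

Lemma clquasi (J : D1 -> Prop) : is_ideal J -> (exists a, a != 0 /\ J a) ->
  quasi_ideal (bracket star) (cl star J).
Proof.
move=> hJ [a [na Ja]]; apply/quasiB; split.
- exact: cl_ideal.
- by exists a; split => //; apply: cl_ext.
- move=> b; split; first exact: cl_idem.
  by apply: cl_ext; apply: cl_ideal.
Qed.


Lemma B1 (P : D -> Prop) : QMax sf P ->
  [/\ Delta1 star (extX P), quasi_ideal (bracket star) (extX P) & ~ extX P 1].
Proof.
move=> hQ; have hPp := QMax_prime Hstar hQ.
have hPi := proj1 hPp.
case: (hQ) => [[_ [[a [na Pa]] hqP]] n1 _].
have hpr := polyext_prime hPp.
have hD : Delta1 star (extX P).
  split; first exact: hpr.
  right; split; [|split].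
  - move=> p; split => h k.
      by rewrite /contr; apply/(polyextC _ hPi); apply: h.
    by move: (h k); rewrite /contr => /(polyextC _ hPi).
  - exact: sf_ringset.
  - exists 1; split.
      apply: (star_ext Hstar (@ringset_Fbar D)); by exists 1; rewrite emb1.
    move=> h; apply: n1; apply/hqP; rewrite emb1; move: h; apply: sf_mono.
    by move=> x [b [hb ->]]; exists b; split => //; move/(polyextC _ hPi): hb.
split => //.
- apply: Delta_quasi => //; exists a%:P; split; first by rewrite polyC_eq0.
  by apply/(polyextC _ hPi).
- by move/(_ 0%N); rewrite coef1.
Qed.


End Main.

Lemma natfact a b c N : (2 <= b)%N -> a = (c + b).-1 -> (a + b <= N.+1)%N -> (c + b <= N)%N.
Proof. move=> /leP h1 -> /leP h3; apply/leP. rewrite -!plusE in h3 *. lia. Qed.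
Lemma natfact2 a b r N : (r < b)%N -> (a + b <= N.+1)%N -> (a + r <= N)%N.
Proof. move=> /leP h1 /leP h3; apply/leP. rewrite -!plusE in h3 *. lia. Qed.

Lemma PD (D : idomainType) (Q1 J : {poly D} -> Prop) j q0 : prime_ideal Q1 ->
  (forall d, Q1 d%:P <-> d = 0) -> is_ideal J -> (forall x, Q1 x -> J x) -> J j -> ~ Q1 j ->
  Q1 q0 -> q0 != 0 -> exists d, d != 0 /\ J d%:P.
Proof.
move=> hQ hc hJ QJ Jj nQj Qq0 nq0.
have [hQi [_ hQp]] := hQ.
have Jsub : forall x y, J x -> J y -> J (x - y).
  by move=> x y hx hy; case: (hJ) => _ [hD _]; apply: hD => //; apply: ideal_opp.
have Jmul : forall r x, J x -> J (r * x) by case: hJ => _ [].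
have Qmul : forall r x, Q1 x -> Q1 (r * x) by case: hQi => _ [].
have nj : j != 0 by apply/eqP => j0; apply: nQj; rewrite j0; case: hQi.
suff H : forall N q m, Q1 q -> q != 0 -> J m -> m != 0 -> (size q + size m <= N)%N ->
    exists d, d != 0 /\ J d%:P by exact: (H _ q0 j Qq0 nq0 Jj nj (leqnn _)).
elim=> [|N IH] q m Qq nq Jm nm hN.
  by move: nq; rewrite -size_poly_eq0; move: hN; rewrite leqn0 addn_eq0 => /andP [/eqP -> _].
have [sm1|sm2] := leqP (size m) 1.
  have /size_poly1P [c nc em] : size m == 1%N.
    by rewrite eqn_leq sm1 lt0n size_poly_eq0.
  by exists c; split => //; rewrite -em.
have lcm : lead_coef m != 0 by rewrite lead_coef_eq0.
set c := lead_coef m ^+ Pdiv.Idomain.scalp j m.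
have nc : c != 0 by rewrite expf_neq0.
have ej := Pdiv.Idomain.divp_eq j m; rewrite -/c in ej.
have Jr : J (Pdiv.Idomain.modp j m).
  have -> : Pdiv.Idomain.modp j m = c *: j - Pdiv.Idomain.divp j m * m by rewrite ej addrC addKr.
  by apply: Jsub; [rewrite -mul_polyC; apply: Jmul | apply: Jmul].
have [r0|rn0] := eqVneq (Pdiv.Idomain.modp j m) 0; last first.
  apply: (IH q _ Qq nq Jr rn0); apply: natfact2 hN.
  by rewrite Pdiv.Idomain.ltn_modp.
set c2 := lead_coef m ^+ Pdiv.Idomain.scalp q m.
have nc2 : c2 != 0 by rewrite expf_neq0.
have eq := Pdiv.Idomain.divp_eq q m; rewrite -/c2 in eq.
have Jr2 : J (Pdiv.Idomain.modp q m).
  have -> : Pdiv.Idomain.modp q m = c2 *: q - Pdiv.Idomain.divp q m * m by rewrite eq addrC addKr.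
  by apply: Jsub; [rewrite -mul_polyC; apply: Jmul; apply: QJ | apply: Jmul].
have [r20|rn0] := eqVneq (Pdiv.Idomain.modp q m) 0; last first.
  apply: (IH q _ Qq nq Jr2 rn0); apply: natfact2 hN.
  by rewrite Pdiv.Idomain.ltn_modp.
rewrite r0 addr0 in ej; rewrite r20 addr0 in eq.
set h := Pdiv.Idomain.divp q m in eq.
have Qhm : Q1 (h * m) by rewrite -eq -mul_polyC; apply: Qmul.
case: (hQp _ _ Qhm) => [Qh|Qm].
- have nh : h != 0.
    apply/eqP => h0; move: eq; rewrite h0 mul0r => /eqP.
    by rewrite scale_poly_eq0 (negbTE nc2) (negbTE nq).
  apply: (IH h m Qh nh Jm nm); apply: (natfact sm2 _ hN).
  by rewrite -size_mul // -eq size_scale.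
- exfalso; have : Q1 (c%:P * j) by rewrite mul_polyC ej; exact: Qmul.
  case/hQp => [/hc c0|]; [by move: nc; rewrite c0 eqxx | exact: nQj].
Qed.


Section Final.
Variable D : idomainType.
Local Notation K := {fraction D}.
Local Notation D1 := {poly D}.
Variable star : (K -> Prop) -> (K -> Prop).
Hypothesis Hstar : semistar star.
Local Notation sf := (star_f star).

Lemma zero_idealD : is_ideal (fun x : D => x = 0).
Proof. by split => //; split => [x y -> ->|r x ->]; rewrite ?addr0 ?mulr0. Qed.

Lemma prod_in (E1 E2 Q : D1 -> Prop) (f g : {poly D1}) : is_ideal Q ->
  (forall x y, E1 x -> E2 y -> Q (x * y)) -> polyext E1 f -> polyext E2 g -> polyext Q (f * g).
Proof.
move=> hQ h hf hg k; rewrite coefM; apply: ideal_sum => // i; apply: h; [exact: hf | exact: hg].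
Qed.

Lemma QMaxB_prime (Q1 : D1 -> Prop) : QMax (bracket star) Q1 -> prime_ideal Q1.
Proof.
move=> [hq n1 hmax]; have [hQi [q0 [nq0 Qq0]] hcl] := proj1 (quasiB star Q1) hq.
have getone : forall a, ~ Q1 a -> exists s, S1 star s /\
    polyext (fun x => exists q u, Q1 q /\ x = q + u * a) s.
  move=> a nQa.
  pose E := fun x => exists q u, Q1 q /\ x = q + u * a.
  have hE : is_ideal E.
    case: (hQi) => [p0 [pD pM]]; split; first by exists 0, 0; rewrite mul0r addr0.
    split.
      move=> x y [p [u [Pp ->]]] [q [v [Pq ->]]]; exists (p + q), (u + v); split; first exact: pD.
      by rewrite mulrDl addrACA.
    move=> r x [p [u [Pp ->]]]; exists (r * p), (r * u); split; first exact: pM.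
    by rewrite mulrDr mulrA.
  have QE : forall x, Q1 x -> E x by move=> x Qx; exists x, 0; rewrite mul0r addr0.
  have hnzE : exists b, b != 0 /\ E b by exists q0; split => //; apply: QE.
  have qE := clquasi star hE hnzE.
  have : cl star E 1.
    apply: NNPP => n1E; apply: nQa; apply/(hmax _ qE n1E).
      by move=> x Qx; apply: cl_ext => //; apply: QE.
    apply: cl_ext => //; exists 0, 1; split; [by case: hQi | by rewrite mul1r add0r].
  by move=> [s [hs hsE]]; exists s; split => //; move: hsE; rewrite mulr1.
split; first exact: hQi. split => // a b Qab.
apply: NNPP => /not_or_and [nQa nQb].
have [sa [hsa Ea]] := getone a nQa.
have [sb [hsb Eb]] := getone b nQb.
apply: n1; apply/hcl; exists (sa * sb); split; first exact: S1_mul.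
rewrite mulr1; apply: (prod_in hQi _ Ea Eb).
move=> x y [p [u [Pp ->]]] [q [v [Pq ->]]].
case: (hQi) => _ [pD pM].
rewrite mulrDl; apply: (pD); first by rewrite mulrC; apply: (pM).
rewrite mulrDr; apply: (pD); first by apply: (pM).
by rewrite mulrACA; apply: (pM).
Qed.


Lemma content_nz (Q1 : D1 -> Prop) q0 : Q1 q0 -> q0 != 0 ->
  exists a, a != 0 /\ content_ideal Q1 a.
Proof.
move=> Qq nq; exists (lead_coef q0); split; first by rewrite lead_coef_eq0.
exact: content_of.
Qed.

Lemma forward (Q1 : D1 -> Prop) : QMax (bracket star) Q1 ->
  ((prime_ideal Q1 /\ (forall d : D, contr Q1 d <-> d = 0) /\
    seteq (star_f star (fimg (content_ideal Q1))) (star (@ringset D)))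
   \/ exists P : D -> Prop, QMax (star_f star) P /\ (forall p, Q1 p <-> extX P p)).
Proof.
move=> hQ; have hp := QMaxB_prime hQ.
case: (hQ) => hq n1 hmax; have [hQi [q0 [nq0 Qq0]] hcl] := proj1 (quasiB star Q1) hq.
have hc := content_ideal_ideal Qq0.
have hcnz : nzideal (content_ideal Q1) by split => //; exact: content_nz Qq0 nq0.
have Qsub : forall P : D -> Prop, (forall a, content_ideal Q1 a -> P a) -> forall q, Q1 q -> extX P q.
  by move=> P hP q Qq k; apply: hP; apply: content_of.
case: (classic (forall d : D, contr Q1 d <-> d = 0)) => [h0|h0].
- left; split => //; split => // x; split; first exact: sf_ringset.
  move=> hx; apply: NNPP => nx.
  have n1c : ~ sf (fimg (content_ideal Q1)) 1.
    by move=> [s [hs [hsc h1]]]; apply: (key_contra Hstar hs h1 hsc); exists x.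
  have [P [hP cP]] := exists_QMax Hstar hcnz n1c.
  have [hD hqP n1P] := B1 Hstar hP.
  have e := hmax (extX P) hqP n1P (Qsub P cP).
  case: (hP) => [[hPi [[a [na Pa]] _]] _ _].
  have : Q1 a%:P by apply/e; apply/(polyextC _ hPi).
  by move/(proj1 (h0 a)) => a0; move: na; rewrite a0 eqxx.
- have [d [nd Qd]] : exists d, d != 0 /\ Q1 d%:P.
    have [d hd] := not_all_ex_not _ _ h0; exists d.
    have [d0|nd] := eqVneq d 0.
      by exfalso; apply: hd; rewrite d0 /contr polyC0; split => // _; case: hQi.
    split => //; apply: NNPP => nQ; apply: hd; split => [/nQ []|e].
    by move: nd; rewrite e eqxx.
  have n1c : ~ sf (fimg (content_ideal Q1)) 1.
    move=> [s [hs [hsc h1]]].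
    have hG : forall x, x \in s -> exists a, x = emb a /\ Gprop Q1 a.
      move=> x xs; have [a [ca ->]] := hsc x (span_mem xs); exists a; split => //.
      exact: content_G.
    have [S [JS [S0 hS]]] := build_S hQi Qd hG.
    have hS1 := S1_build Hstar nd S0 hs h1 hS.
    by apply: n1; apply/hcl; exists S; split => //; rewrite mulr1.
  have [P [hP cP]] := exists_QMax Hstar hcnz n1c.
  have [hD hqP n1P] := B1 Hstar hP.
  have e := hmax (extX P) hqP n1P (Qsub P cP).
  by right; exists P; split => // p; split => /e.
Qed.


Lemma backwardA (Q1 : D1 -> Prop) : prime_ideal Q1 -> (forall d : D, contr Q1 d <-> d = 0) ->
  seteq (star_f star (fimg (content_ideal Q1))) (star (@ringset D)) -> QMax (bracket star) Q1.
Proof.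
move=> hp h0 hseq; have hQi := proj1 hp.
have hD : Delta1 star Q1 by split => //; left.
have one_c : sf (fimg (content_ideal Q1)) 1.
  apply/hseq; apply: (star_ext Hstar (@ringset_Fbar D)); by exists 1; rewrite emb1.
have [q0 [nq0 Qq0]] : exists q, q != 0 /\ Q1 q.
  move: one_c => [s [hs [hsc _]]]; have /hasP [x xs nx] := hs.
  have [a [ca ex]] := hsc x (span_mem xs).
  have [n [q [hq hG]]] := content_G ca.
  apply: NNPP => hno; move: nx; rewrite ex.
  have -> : a = 0.
    apply: (hG _ zero_idealD) => i k.
    have -> : q i = 0 by apply: NNPP => nqi; apply: hno; exists (q i); split => //; apply/eqP.
    by rewrite coef0.
  by rewrite emb0 eqxx.
have hq : quasi_ideal (bracket star) Q1 by apply: Delta_quasi => //; exists q0.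
split => //; first by case: hp => _ [].
move=> J hJq nJ1 QJ x; split; last exact: QJ.
move=> Jx; apply: NNPP => nQx.
have [hJi hJnz hJcl] := proj1 (quasiB star J) hJq.
have [d [nd Jd]] := PD hp h0 hJi QJ Jx nQx Qq0 nq0.
move: one_c => [s [hs [hsc h1]]].
have hG : forall y, y \in s -> exists a, y = emb a /\ Gprop J a.
  move=> y ys; have [a [ca ->]] := hsc y (span_mem ys); exists a; split => //.
  have [n [q [hq' hG]]] := content_G ca; exists n, q; split => // i; apply: QJ; exact: hq'.
have [S [JS [S0 hS]]] := build_S hJi Jd hG.
have hS1 := S1_build Hstar nd S0 hs h1 hS.
by apply: nJ1; apply/hJcl; exists S; split => //; rewrite mulr1.
Qed.

Lemma backwardB (P : D -> Prop) : QMax sf P -> QMax (bracket star) (extX P).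
Proof.
move=> hP; have [hD hqP n1P] := B1 Hstar hP.
have hPi := proj1 (QMax_prime Hstar hP).
split => // J hJq nJ1 PJ x; split; last exact: PJ.
move=> Jx; apply: NNPP => nPx.
have [k nk] := not_all_ex_not _ _ nPx.
have [s [hs [hsa h1]]] := QMax_getone Hstar hP nk.
have [hJi hJnz hJcl] := proj1 (quasiB star J) hJq.
case: (hP) => [[_ [[b [nb Pb]] _]] _ _].
have Jb : J b%:P by apply: PJ; apply/(polyextC _ hPi).
have hG : forall y, y \in s -> exists a, y = emb a /\ Gprop J a.
  move=> y ys; have [p [u [Pp ->]]] := hsa y ys; exists (p + u * x`_k); split => //.
  exists 1%N, (fun _ => 'X^k * p%:P + u%:P * x); split.
    move=> _; case: (hJi) => _ [hJD hJM]; apply: hJD; apply: hJM; last exact: Jx.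
    by apply: PJ; apply/(polyextC _ hPi).
  move=> P' hP' hq; have := hq ord0 k.
  by rewrite coefD coefXnM ltnn subnn coefC eqxx coefCM.
have [S [JS [S0 hS]]] := build_S hJi Jb hG.
have hS1 := S1_build Hstar nb S0 hs h1 hS.
by apply: nJ1; apply/hJcl; exists S; split => //; rewrite mulr1.
Qed.

End Final.

Theorem theorem2p3 (D : idomainType)
    (star : ({fraction D} -> Prop) -> ({fraction D} -> Prop))
    (Hstar : semistar star) (Q1 : {poly D} -> Prop) :
  QMax (bracket star) Q1 <->
  ((prime_ideal Q1 /\ (forall d : D, contr Q1 d <-> d = 0) /\
    seteq (star_f star (fimg (content_ideal Q1))) (star (@ringset D)))
   \/ exists P : D -> Prop, QMax (star_f star) P /\ (forall p, Q1 p <-> extX P p)).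
Proof.
split; first exact: forward.
case=> [[hp [h0 hs]]|[P [hP he]]]; first exact: backwardA.
have -> : Q1 = extX P.
  by apply: functional_extensionality => p; apply: propositional_extensionality.
exact: backwardB.
Qed.
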